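(* Let $m\ge2$ be even and let $\mathcal{A},\mathcal{B}$ be sub-symmetric real $m$-th order $n$-dimensional tensors ($n=n_1+\cdots+n_r$). Consider the problem $$\begin{array}{cl}\min & f(x,y,w,\lambda):=\|y-\lambda^{\frac1{m-1}}x\|^2+(x^\top w)^2\\ \text{s.t.} & w-\mathcal{A}y^{m-1}+\mathcal{B}x^{m-1}=0,\\ & (x^i_\circ)^2-\|x^i_\bullet\|^2\ge0,\ x^i_\circ\ge0,\ i=1,\ldots,r,\\ & (w^i_\circ)^2-\|w^i_\bullet\|^2\ge0,\ w^i_\circ\ge0,\ i=1,\ldots,r,\\ & e^\top x=1,\quad e^\top y=\lambda^{\frac1{m-1}}.\end{array}$$ Let $(\bar x,\bar y,\bar w,\bar\lambda)$ be a stationary point of this problem with $\bar\lambda\neq0$, with associated multipliers as below, and let $\bar\delta,\bar\eta$ be the multipliers of the constraints $e^\top x=1$ and $e^\top y=\lambda^{1/(m-1)}$, respectively. Then $f(\bar x,\bar y,\bar w,\bar\lambda)=0$ if and only if $\bar\delta=\bar\eta=0$.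
   Context: A real $m$-th order $n$-dimensional tensor $\mathcal{A}=(a_{i_1\ldots i_m})$ is sub-symmetric if for each $i$ the tensor $(a_{ii_2\ldots i_m})_{i_2,\ldots,i_m}$ is invariant under permutations of $i_2,\ldots,i_m$. $\mathcal{A}x^{m-1}\in\mathbb{R}^n$ has $i$-th component $\sum_{i_2,\ldots,i_m}a_{ii_2\ldots i_m}x_{i_2}\cdots x_{i_m}$. Vectors are written $x=(x^1,\ldots,x^r)\in\mathbb{R}^{n_1}\times\cdots\times\mathbb{R}^{n_r}$, $x^i=(x^i_\circ,x^i_\bullet)\in\mathbb{R}\times\mathbb{R}^{n_i-1}$ (similarly $y,w$). $e=(e^1,\ldots,e^r)$, $e^i=(1,0,\ldots,0)^\top\in\mathbb{R}^{n_i}$. Since $m-1$ is odd, $\lambda^{1/(m-1)}$ is the real $(m-1)$-th root (differentiable at $\lambda\ne0$). A stationary point is a feasible point $(\bar x,\bar y,\bar w,\bar\lambda)$ for which there exist multipliers $\bar\alpha\in\mathbb{R}^n$, $\bar\beta,\bar\gamma,\bar\mu,\bar\theta\in\mathbb{R}^r_+$, $\bar\delta,\bar\eta\in\mathbb{R}$ such that the gradient with respect to $(x,y,w,\lambda)$ of the Lagrangian $$f-\bar\alpha^\top(w-\mathcal{A}y^{m-1}+\mathcal{B}x^{m-1})-\sum_i\bar\beta_i\big((x^i_\circ)^2-\|x^i_\bullet\|^2\big)-\sum_i\bar\gamma_ix^i_\circ-\sum_i\bar\mu_i\big((w^i_\circ)^2-\|w^i_\bullet\|^2\big)-\sum_i\bar\theta_iw^i_\circ-\bar\delta(e^\top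 x-1)-\bar\eta(e^\top y-\lambda^{\frac1{m-1}})$$ vanishes at $(\bar x,\bar y,\bar w,\bar\lambda)$, and each inequality multiplier times its constraint value is zero. *)

(* Defs.v *)
From HB Require Import structures.
From mathcomp Require Import all_boot all_order all_algebra all_fingroup.
From mathcomp Require Import all_classical all_reals all_analysis.
Set Implicit Arguments. Unset Strict Implicit. Unset Printing Implicit Defensive.
Import Order.TTheory GRing.Theory Num.Theory.
Import numFieldNormedType.Exports.
Local Open Scope ring_scope.

Section Defs.
Variable R : realType.
Variable r : nat.
(* block i has size n_i = (d i).+1; coordinate 0 of each block is x^i_circ *)
Variable d : 'I_r -> nat.

(* global index set of R^n, n = n_1 + ... + n_r, organized by blocks *)
Definition idx := {i : 'I_r & 'I_(d i).+1}.
Definition vec := idx -> R.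

Definition blk (i : 'I_r) (j : 'I_(d i).+1) : idx := existT _ i j.

Definition hd (x : vec) (i : 'I_r) : R := x (blk (ord0 : 'I_(d i).+1)).
Definition tlsq (x : vec) (i : 'I_r) : R :=
  \sum_(j : 'I_(d i).+1 | j != ord0) x (blk j) ^+ 2.
Definition eT (x : vec) : R := \sum_(i < r) hd x i.
Definition dotv (x y : vec) : R := \sum_(k : idx) x k * y k.

(* an m-th order n-dimensional tensor: a_{k i_2 ... i_m} = A k s,
   where s : 'I_(m-1) -> idx lists (i_2, ..., i_m) *)
Definition tensor (m : nat) := idx -> {ffun 'I_m.-1 -> idx} -> R.

Definition tapp (m : nat) (A : tensor m) (x : vec) : vec :=
  fun k => \sum_(s : {ffun 'I_m.-1 -> idx}) A k s * \prod_(l < m.-1) x (s l).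

Definition subsym (m : nat) (A : tensor m) : Prop :=
  forall k (s : {ffun 'I_m.-1 -> idx}) (p : 'S_m.-1),
    A k [ffun l => s (p l)] = A k s.

Definition oddroot (k : nat) (lam : R) : R :=
  if 0 <= lam then lam `^ (k%:R^-1) else - ((- lam) `^ (k%:R^-1)).

Definition fobj (m : nat) (x y w : vec) (lam : R) : R :=
  \sum_(k : idx) (y k - oddroot m.-1 lam * x k) ^+ 2 + (dotv x w) ^+ 2.

Definition feasible (m : nat) (A B : tensor m) (x y w : vec) (lam : R) : Prop :=
  [/\ forall k, w k - tapp A y k + tapp B x k = 0,
      forall i, 0 <= hd x i ^+ 2 - tlsq x i /\ 0 <= hd x i,
      forall i, 0 <= hd w i ^+ 2 - tlsq w i /\ 0 <= hd w i,
      eT x = 1 & eT y = oddroot m.-1 lam].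

Definition lagr (m : nat) (A B : tensor m) (al : vec)
  (be ga mu th : 'I_r -> R) (de et : R) (x y w : vec) (lam : R) : R :=
  fobj m x y w lam
  - dotv al (fun k => w k - tapp A y k + tapp B x k)
  - \sum_(i < r) be i * (hd x i ^+ 2 - tlsq x i)
  - \sum_(i < r) ga i * hd x i
  - \sum_(i < r) mu i * (hd w i ^+ 2 - tlsq w i)
  - \sum_(i < r) th i * hd w i
  - de * (eT x - 1)
  - et * (eT y - oddroot m.-1 lam).

Definition upd (x : vec) (j : idx) (t : R) : vec :=
  fun k => x k + t * (k == j)%:R.

Definition stationary (m : nat) (A B : tensor m) (x y w : vec) (lam : R)
  (al : vec) (be ga mu th : 'I_r -> R) (de et : R) : Prop :=
  [/\ feasible A B x y w lam,
      (forall j, is_derive (0:R) (1:R)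
         (fun t => lagr A B al be ga mu th de et (upd x j t) y w lam) 0)
      /\ (forall j, is_derive (0:R) (1:R)
         (fun t => lagr A B al be ga mu th de et x (upd y j t) w lam) 0)
      /\ (forall j, is_derive (0:R) (1:R)
         (fun t => lagr A B al be ga mu th de et x y (upd w j t) lam) 0)
      /\ is_derive lam (1:R)
         (fun l => lagr A B al be ga mu th de et x y w l) 0,
      forall i, [/\ 0 <= be i, 0 <= ga i, 0 <= mu i & 0 <= th i],
      forall i, be i * (hd x i ^+ 2 - tlsq x i) = 0 /\ ga i * hd x i = 0
      & forall i, mu i * (hd w i ^+ 2 - tlsq w i) = 0 /\ th i * hd w i = 0].

End Defs.

(* Main.v *)
Require Import Defs.
From HB Require Import structures.
From mathcomp Require Import all_boot all_order all_algebra all_fingroup.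
From mathcomp Require Import all_classical all_reals all_analysis.
From mathcomp Require Import ring lra.
Import Order.TTheory GRing.Theory Num.Theory.
Local Open Scope ring_scope.

Set Implicit Arguments. Unset Strict Implicit.
Section S.
Variable R : realType.

Definition ID (a : R) f (df : R) := is_derive a 1 f df.
#[local] Typeclasses Opaque ID.
Lemma deq (a : R) f df df' : ID a f df -> df = df' -> is_derive a 1 f df'.
Proof. by move=> h <-. Qed.

Lemma duniq (a : R) (f : R -> R) (df1 df2 : R) : is_derive a 1 f df1 -> is_derive a 1 f df2 -> df1 = df2.
Proof. by case=> _ <-; case=> _ <-. Qed.

Lemma dcst (a c : R) : is_derive a 1 (fun _ : R => c) 0.
Proof. exact: is_derive_cst. Qed.
Lemma did (a : R) : is_derive a 1 (fun t : R => t) 1.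
Proof. exact: is_derive_id. Qed.
Lemma dD (a : R) (f g : R -> R) df dg : is_derive a 1 f df -> is_derive a 1 g dg ->
  is_derive a 1 (fun t => f t + g t) (df + dg).
Proof. move=> ??; exact: is_deriveD. Qed.
Lemma dB (a : R) (f g : R -> R) df dg : is_derive a 1 f df -> is_derive a 1 g dg ->
  is_derive a 1 (fun t => f t - g t) (df - dg).
Proof. move=> ??; exact: is_deriveB. Qed.
Lemma dM (a : R) (f g : R -> R) df dg : is_derive a 1 f df -> is_derive a 1 g dg ->
  is_derive a 1 (fun t => f t * g t) (f a * dg + g a * df).
Proof. move=> ??; exact: is_deriveM. Qed.
Lemma dX (a : R) (f : R -> R) n df : is_derive a 1 f df ->
  is_derive a 1 (fun t => f t ^+ n) (n%:R * f a ^+ n.-1 * df).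
Proof.
move=> h; elim: n => [|n IH].
  by apply: is_derive_eq; [exact: dcst| rewrite mul0r mul0r].
have -> : (fun t => f t ^+ n.+1) = (fun t => f t * f t ^+ n).
  by apply: funext => t; rewrite exprS.
apply: is_derive_eq.
rewrite /GRing.scale /=.
case: n {IH} => [|n] /=; first by rewrite expr0; ring.
rewrite !exprS -!natr1; ring.
Qed.

Lemma dsumseq (a : R) (I : Type) (s : seq I) (P : pred I) (F : I -> R -> R) dF :
  (forall i, is_derive a 1 (F i) (dF i)) ->
  is_derive a 1 (fun t => \sum_(i <- s | P i) F i t) (\sum_(i <- s | P i) dF i).
Proof.
move=> h; elim: s => [|i s IH].
  have -> : (fun t => \sum_(i <- [::] | P i) F i t) = (fun=> 0).
    by apply: funext => t; rewrite big_nil.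
  by rewrite big_nil; exact: dcst.
have -> : (fun t => \sum_(j <- i :: s | P j) F j t) =
   (fun t => (if P i then F i t else 0) + \sum_(j <- s | P j) F j t).
  by apply: funext => t; rewrite big_cons; case: (P i); rewrite ?add0r.
rewrite big_cons; case: (P i).
  exact: dD.
rewrite -[X in is_derive _ _ _ X]add0r; apply: dD => //; exact: dcst.
Qed.

Variables (r : nat) (d : 'I_r -> nat).
Local Notation vec := (vec R d).
Local Notation idx := (idx d).

Definition Sm (x0 : vec) (F : vec -> R) := exists dF : vec, forall v : vec,
  is_derive (0:R) 1 (fun t => F (fun k => x0 k + t * v k)) (\sum_k v k * dF k).

Lemma x0v0 (x0 v : vec) : (fun k => x0 k + 0 * v k) = x0.
Proof. by apply: funext => k; rewrite mul0r addr0. Qed.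

Section Sm.
Variable x0 : vec.

Lemma Sm_ext F G : (forall z, F z = G z) -> Sm x0 F -> Sm x0 G.
Proof.
move=> e [dF h]; exists dF => v.
have -> : (fun t => G (fun k => x0 k + t * v k)) = (fun t => F (fun k => x0 k + t * v k)).
  by apply: funext => t; rewrite e.
exact: h.
Qed.

Lemma Sm_cst c : Sm x0 (fun _ => c).
Proof.
exists (fun _ => 0) => v; apply: (deq (dcst _ _)).
by rewrite big1 // => k _; rewrite mulr0.
Qed.

Lemma Sm_coord j : Sm x0 (fun z => z j).
Proof.
exists (fun k => (k == j)%:R) => v; apply: (deq (dD (dcst _ _) (dM (did _) (dcst _ _)))).
rewrite (bigD1 j) //= big1 ?eqxx; first by rewrite mul0r !add0r mulr1 addr0.
by move=> k /negbTE ->; rewrite mulr0.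
Qed.

Lemma Sm_add F G : Sm x0 F -> Sm x0 G -> Sm x0 (fun z => F z + G z).
Proof.
move=> [dF hF] [dG hG]; exists (fun k => dF k + dG k) => v.
apply: (deq (dD (hF v) (hG v))).
by rewrite -big_split; apply: eq_bigr => k _; rewrite mulrDr.
Qed.

Lemma Sm_sub F G : Sm x0 F -> Sm x0 G -> Sm x0 (fun z => F z - G z).
Proof.
move=> [dF hF] [dG hG]; exists (fun k => dF k - dG k) => v.
apply: (deq (dB (hF v) (hG v))).
by rewrite -sumrB; apply: eq_bigr => k _; rewrite mulrBr.
Qed.

Lemma Sm_opp F : Sm x0 F -> Sm x0 (fun z => - F z).
Proof.
move=> h; apply: (Sm_ext (F := fun z => 0 - F z)); first by move=> z; rewrite add0r.
by apply: Sm_sub => //; exact: Sm_cst.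
Qed.

Lemma Sm_mul F G : Sm x0 F -> Sm x0 G -> Sm x0 (fun z => F z * G z).
Proof.
move=> [dF hF] [dG hG]; exists (fun k => F x0 * dG k + G x0 * dF k) => v.
apply: (deq (dM (hF v) (hG v))).
rewrite /= !x0v0 !mulr_sumr -big_split /=; apply: eq_bigr => k _; ring.
Qed.

Lemma Sm_exp F n : Sm x0 F -> Sm x0 (fun z => F z ^+ n).
Proof.
move=> h; elim: n => [|n IH].
  apply: (Sm_ext (F := fun _ => 1)); last exact: Sm_cst.
  by move=> z; rewrite expr0.
apply: (Sm_ext (F := fun z => F z * F z ^+ n)); last exact: Sm_mul.
by move=> z; rewrite exprS.
Qed.

Lemma Sm_sum (I : Type) (s : seq I) (P : pred I) (F : I -> vec -> R) :
  (forall i, Sm x0 (F i)) -> Sm x0 (fun z => \sum_(i <- s | P i) F i z).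
Proof.
move=> h; elim: s => [|i s IH].
  apply: (Sm_ext (F := fun _ => 0)); last exact: Sm_cst.
  by move=> z; rewrite big_nil.
apply: (Sm_ext (F := fun z => (if P i then F i z else 0) + \sum_(j <- s | P j) F j z)).
  by move=> z; rewrite big_cons; case: (P i); rewrite ?add0r.
apply: Sm_add => //; case: (P i) => //; exact: Sm_cst.
Qed.

Lemma Sm_prod (I : Type) (s : seq I) (P : pred I) (F : I -> vec -> R) :
  (forall i, Sm x0 (F i)) -> Sm x0 (fun z => \prod_(i <- s | P i) F i z).
Proof.
move=> h; elim: s => [|i s IH].
  apply: (Sm_ext (F := fun _ => 1)); last exact: Sm_cst.
  by move=> z; rewrite big_nil.
apply: (Sm_ext (F := fun z => (if P i then F i z else 1) * \prod_(j <- s | P j) F j z)).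
  by move=> z; rewrite big_cons; case: (P i); rewrite ?mul1r.
apply: Sm_mul => //; case: (P i) => //; exact: Sm_cst.
Qed.

Lemma Sm_euler F : Sm x0 F ->
  (forall j, is_derive (0:R) 1 (fun t => F (upd x0 j t)) 0) ->
  forall v, is_derive (0:R) 1 (fun t => F (fun k => x0 k + t * v k)) 0.
Proof.
move=> [dF hF] hj v.
have z j : dF j = 0.
  have := duniq (hF (fun k => (k == j)%:R)) (hj j).
  rewrite (bigD1 j) //= big1 ?eqxx ?mul1r ?addr0 //.
  by move=> k /negbTE ->; rewrite mul0r.
apply: (deq (hF v)).
by rewrite big1 // => k _; rewrite z mulr0.
Qed.

End Sm.

Ltac smt := repeat first [apply: Sm_sub | apply: Sm_add | apply: Sm_opp | apply: Sm_mul | apply: Sm_exp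
  | apply: Sm_sum => ? | apply: Sm_prod => ? | apply: Sm_coord | apply: Sm_cst].

Section Lag.
Variables (m : nat) (A B : tensor R d m) (al : vec) (be ga mu th : 'I_r -> R) (de et : R).
Variables (x y w : vec) (lam : R).

Lemma Sm_x : Sm x (fun z => lagr A B al be ga mu th de et z y w lam).
Proof. rewrite /lagr /fobj /dotv /tapp /eT /hd /tlsq /=; smt. Qed.
Lemma Sm_y : Sm y (fun z => lagr A B al be ga mu th de et x z w lam).
Proof. rewrite /lagr /fobj /dotv /tapp /eT /hd /tlsq /=; smt. Qed.
Lemma Sm_w : Sm w (fun z => lagr A B al be ga mu th de et x y z lam).
Proof. rewrite /lagr /fobj /dotv /tapp /eT /hd /tlsq /=; smt. Qed.
End Lag.

Lemma dU : is_derive (0:R) 1 (fun t : R => 1 + t) 1.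
Proof. apply: (deq (dD (dcst _ _) (did _))); by rewrite add0r. Qed.

Lemma dUn n : is_derive (0:R) 1 (fun t : R => (1 + t) ^+ n) n%:R.
Proof. apply: (deq (dX n dU)); by rewrite addr0 expr1n !mulr1. Qed.

Lemma D1 a b : is_derive (0:R) 1 (fun t : R => (a - b * (1 + t)) ^+ 2) ((a - b) * b * (-2)).
Proof.
apply: (deq (dX 2 (dB (dcst _ a) (dM (dcst _ b) dU)))).
rewrite addr0 mulr1 expr1 /=; ring.
Qed.

Lemma D2 b : is_derive (0:R) 1 (fun t : R => (b * (1 + t)) ^+ 2) (b * b * 2).
Proof.
apply: (deq (dX 2 (dM (dcst _ b) dU))).
rewrite addr0 mulr1 expr1 /=; ring.
Qed.

Lemma D3 a b n : is_derive (0:R) 1 (fun t : R => a + b * (1 + t) ^+ n) (b * n%:R).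
Proof.
apply: (deq (dD (dcst _ a) (dM (dcst _ b) (dUn n)))).
rewrite /=; ring.
Qed.

Lemma D4 b : is_derive (0:R) 1 (fun t : R => b * (1 + t)) b.
Proof.
apply: (deq (dM (dcst _ b) dU)).
rewrite /=; ring.
Qed.

Lemma D5 b n : is_derive (0:R) 1 (fun t : R => b * (1 + t) ^+ n) (b * n%:R).
Proof.
apply: (deq (dM (dcst _ b) (dUn n))).
rewrite /=; ring.
Qed.

Section Scale.
Variable m : nat.
Lemma tlsq_sc (a : R) (z : vec) i : tlsq (fun k => a * z k) i = a ^+ 2 * tlsq z i.
Proof. rewrite /tlsq mulr_sumr; apply: eq_bigr => j _; exact: exprMn. Qed.
Lemma eT_sc (a : R) (z : vec) : eT (fun k => a * z k) = a * eT z.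
Proof. by rewrite /eT mulr_sumr. Qed.
Lemma dotv_scl (a : R) (z w : vec) : dotv (fun k => a * z k) w = a * dotv z w.
Proof. rewrite /dotv mulr_sumr; apply: eq_bigr => k _; ring. Qed.
Lemma dotv_scr (a : R) (z w : vec) : dotv z (fun k => a * w k) = a * dotv z w.
Proof. rewrite /dotv mulr_sumr; apply: eq_bigr => k _; ring. Qed.
Lemma tapp_sc (A : tensor R d m) (a : R) (z : vec) k :
  tapp A (fun k => a * z k) k = a ^+ m.-1 * tapp A z k.
Proof.
rewrite /tapp mulr_sumr; apply: eq_bigr => s _.
by rewrite big_split /= prodr_const card_ord mulrCA.
Qed.
End Scale.

Lemma vsc (z : vec) t : (fun k => z k + t * z k) = (fun k => (1 + t) * z k).
Proof. by apply: funext => k; rewrite mulrDl mul1r. Qed.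


Lemma Dq a c b : is_derive (0:R) 1 (fun t : R => (a - c * ((1 + t) * b)) ^+ 2)
  ((a - c * b) * (c * b) * (-2)).
Proof.
apply: (deq (dX 2 (dB (dcst _ a) (dM (dcst _ c) (dM dU (dcst _ b)))))).
rewrite /= addr0 expr1; ring.
Qed.
Lemma Dqy a b : is_derive (0:R) 1 (fun t : R => ((1 + t) * a - b) ^+ 2) ((a - b) * a * 2).
Proof.
apply: (deq (dX 2 (dB (dM dU (dcst _ a)) (dcst _ b)))).
rewrite /= addr0 expr1; ring.
Qed.
Lemma Dp p : is_derive (0:R) 1 (fun t : R => ((1 + t) * p) ^+ 2) (p * p * 2).
Proof.
apply: (deq (dX 2 (dM dU (dcst _ p)))).
rewrite /= addr0 expr1; ring.
Qed.
Lemma Dal al a b n : is_derive (0:R) 1 (fun t : R => al * (a + (1 + t) ^+ n * b))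
  (al * (b * n%:R)).
Proof.
apply: (deq (dM (dcst _ al) (dD (dcst _ a) (dM (dUn n) (dcst _ b))))).
rewrite /=; ring.
Qed.
Lemma Daly al a b e n : is_derive (0:R) 1 (fun t : R => al * (a - (1 + t) ^+ n * b + e))
  (- (al * (b * n%:R))).
Proof.
apply: (deq (dM (dcst _ al) (dD (dB (dcst _ a) (dM (dUn n) (dcst _ b))) (dcst _ e)))).
rewrite /=; ring.
Qed.
Lemma Dalw al a b e : is_derive (0:R) 1 (fun t : R => al * ((1 + t) * a - b + e)) (al * a).
Proof.
apply: (deq (dM (dcst _ al) (dD (dB (dM dU (dcst _ a)) (dcst _ b)) (dcst _ e)))).
rewrite /= addr0; ring.
Qed.
Lemma Dbe be h q : is_derive (0:R) 1
  (fun t : R => be * (((1 + t) * h) ^+ 2 - (1 + t) ^+ 2 * q)) (be * (h * h * 2 - q * 2)).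
Proof.
apply: (deq (dM (dcst _ be) (dB (dX 2 (dM dU (dcst _ h))) (dM (dUn 2) (dcst _ q))))).
rewrite /= addr0 expr1; ring.
Qed.
Lemma Dga g h : is_derive (0:R) 1 (fun t : R => g * ((1 + t) * h)) (g * h).
Proof.
apply: (deq (dM (dcst _ g) (dM dU (dcst _ h)))).
rewrite /= addr0; ring.
Qed.
Lemma Dde g e c : is_derive (0:R) 1 (fun t : R => g * ((1 + t) * e - c)) (g * e).
Proof.
apply: (deq (dM (dcst _ g) (dB (dM dU (dcst _ e)) (dcst _ c)))).
rewrite /= addr0; ring.
Qed.

Lemma tapp_scf m (A : tensor R d m) (a : R) (z : vec) :
  tapp A (fun k => a * z k) = (fun k => a ^+ m.-1 * tapp A z k).
Proof. by apply: funext => k; rewrite tapp_sc. Qed.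
Lemma tlsq_scf (a : R) (z : vec) :
  tlsq (fun k => a * z k) = (fun i => a ^+ 2 * tlsq z i).
Proof. by apply: funext => k; rewrite tlsq_sc. Qed.


Lemma oddN (z : R) n : odd n -> (- z) ^+ n = - z ^+ n.
Proof. by move=> ho; rewrite exprNn -signr_odd ho expr1 mulN1r. Qed.

Lemma powK k (a : R) : odd k -> 0 <= a -> (a ^+ k) `^ (k%:R^-1) = a.
Proof.
move=> ho ha; have k0 : (k%:R : R) != 0 by rewrite pnatr_eq0; case: k ho.
by rewrite -powR_mulrn // -powRrM mulfV // powRr1.
Qed.

Lemma oddrK1 k (a : R) : odd k -> oddroot k (a ^+ k) = a.
Proof.
move=> ho; rewrite /oddroot; case: (leP 0 a) => ha.
  by rewrite exprn_ge0 // powK.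
have -> : a ^+ k = - (- a) ^+ k by rewrite oddN // opprK.
have hp : 0 < (- a) ^+ k by rewrite exprn_gt0 // oppr_gt0.
rewrite oppr_ge0 leNgt hp /= opprK powK //; first by rewrite opprK.
by rewrite oppr_ge0 ltW.
Qed.

Lemma oddrK2 k (l : R) : odd k -> oddroot k l ^+ k = l.
Proof.
move=> ho; have k0 : (k%:R : R) != 0 by rewrite pnatr_eq0; case: k ho.
rewrite /oddroot; case: (leP 0 l) => hl.
  by rewrite -powR_mulrn ?powR_ge0 // -powRrM mulVf // powRr1.
rewrite oddN // -powR_mulrn ?powR_ge0 // -powRrM mulVf // powRr1 ?opprK //.
by rewrite oppr_ge0 ltW.
Qed.

Lemma Dl (a0 a b : R) : is_derive a0 1 (fun cc : R => (a - cc * b) ^+ 2) ((a - a0 * b) * b * (-2)).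
Proof.
apply: (deq (dX 2 (dB (dcst _ a) (dM (did _) (dcst _ b))))).
rewrite /= expr1; ring.
Qed.

Section Blocks.
Variables (m : nat) (A B : tensor R d m) (al : vec) (be ga mu th : 'I_r -> R) (de et : R).
Variables (x y w : vec) (lam : R).
Local Notation c := (oddroot m.-1 lam).
Local Notation L := (lagr A B al be ga mu th de et).

Lemma Ex : (forall j, is_derive (0:R) 1 (fun t => L (upd x j t) y w lam) 0) ->
  (forall i, be i * (hd x i ^+ 2 - tlsq x i) = 0 /\ ga i * hd x i = 0) ->
  eT x = 1 ->
  \sum_k (y k - c * x k) * (c * x k) * (-2) + dotv x w * dotv x w * 2
  - \sum_k al k * (tapp B x k * m.-1%:R) - de = 0.
Proof.
move=> hst hc he.
have H := Sm_euler (Sm_x A B al be ga mu th de et x y w lam) hst x.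
have e : (fun t => L (fun k => x k + t * x k) y w lam) =
  (fun t => \sum_k (y k - c * ((1 + t) * x k)) ^+ 2 + ((1 + t) * dotv x w) ^+ 2
 - \sum_k al k * (w k - tapp A y k + (1 + t) ^+ m.-1 * tapp B x k)
 - \sum_(i < r) be i * (((1 + t) * hd x i) ^+ 2 - (1 + t) ^+ 2 * tlsq x i)
 - \sum_(i < r) ga i * ((1 + t) * hd x i)
 - \sum_(i < r) mu i * (hd w i ^+ 2 - tlsq w i)
 - \sum_(i < r) th i * hd w i
 - de * ((1 + t) * eT x - 1)
 - et * (eT y - c)).
  apply: funext => t; rewrite vsc /lagr /fobj tapp_scf dotv_scl eT_sc tlsq_scf.
  done.
rewrite e in H.
have H2 := dB (dB (dB (dB (dB (dB (dB (dD (dsumseq _ _ (fun k => Dq (y k) c (x k))) (Dp (dotv x w)))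
  (dsumseq _ _ (fun k => Dal (al k) (w k - tapp A y k) (tapp B x k) m.-1)))
  (dsumseq _ _ (fun i => Dbe (be i) (hd x i) (tlsq x i))))
  (dsumseq _ _ (fun i => Dga (ga i) (hd x i))))
  (dcst 0 (\sum_(i < r) mu i * (hd w i ^+ 2 - tlsq w i))))
  (dcst 0 (\sum_(i < r) th i * hd w i)))
  (Dde de (eT x) 1))
  (dcst 0 (et * (eT y - c))).
have := duniq (H2 _ _ _ _ _ _ _ _) H.
clear H2 H e hst => E.
have Z1 : \sum_(i < r) be i * (hd x i * hd x i * 2 - tlsq x i * 2) = 0.
  rewrite big1 // => i _; have [h _] := hc i.
  by rewrite -[hd x i * hd x i]expr2 -mulrBl mulrA h mul0r.
have Z2 : \sum_(i < r) ga i * hd x i = 0.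
  by rewrite big1 // => i _; case: (hc i).
by rewrite -[RHS]E Z1 Z2 he; ring.
Qed.

Lemma Ey : (forall j, is_derive (0:R) 1 (fun t => L x (upd y j t) w lam) 0) ->
  eT y = c ->
  \sum_k (y k - c * x k) * y k * 2 + \sum_k al k * (tapp A y k * m.-1%:R) - et * c = 0.
Proof.
move=> hst he.
have H := Sm_euler (Sm_y A B al be ga mu th de et x y w lam) hst y.
have e : (fun t => L x (fun k => y k + t * y k) w lam) =
  (fun t => \sum_k ((1 + t) * y k - c * x k) ^+ 2 + dotv x w ^+ 2
 - \sum_k al k * (w k - (1 + t) ^+ m.-1 * tapp A y k + tapp B x k)
 - \sum_(i < r) be i * (hd x i ^+ 2 - tlsq x i)
 - \sum_(i < r) ga i * hd x i
 - \sum_(i < r) mu i * (hd w i ^+ 2 - tlsq w i)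
 - \sum_(i < r) th i * hd w i
 - de * (eT x - 1)
 - et * ((1 + t) * eT y - c)).
  apply: funext => t; rewrite vsc /lagr /fobj tapp_scf eT_sc.
  done.
rewrite e in H.
have H2 := dB (dB (dB (dB (dB (dB (dB (dD (dsumseq _ _ (fun k => Dqy (y k) (c * x k))) (dcst 0 (dotv x w ^+ 2)))
  (dsumseq _ _ (fun k => Daly (al k) (w k) (tapp A y k) (tapp B x k) m.-1)))
  (dcst 0 (\sum_(i < r) be i * (hd x i ^+ 2 - tlsq x i))))
  (dcst 0 (\sum_(i < r) ga i * hd x i)))
  (dcst 0 (\sum_(i < r) mu i * (hd w i ^+ 2 - tlsq w i))))
  (dcst 0 (\sum_(i < r) th i * hd w i)))
  (dcst 0 (de * (eT x - 1))))
  (Dde et (eT y) c).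
have := duniq (H2 _ _ _ _) H.
clear H2 H e hst => E.
rewrite -[RHS]E he sumrN; ring.
Qed.

Lemma Ew : (forall j, is_derive (0:R) 1 (fun t => L x y (upd w j t) lam) 0) ->
  (forall i, mu i * (hd w i ^+ 2 - tlsq w i) = 0 /\ th i * hd w i = 0) ->
  dotv x w * dotv x w * 2 - \sum_k al k * w k = 0.
Proof.
move=> hst hc.
have H := Sm_euler (Sm_w A B al be ga mu th de et x y w lam) hst w.
have e : (fun t => L x y (fun k => w k + t * w k) lam) =
  (fun t => \sum_k (y k - c * x k) ^+ 2 + ((1 + t) * dotv x w) ^+ 2
 - \sum_k al k * ((1 + t) * w k - tapp A y k + tapp B x k)
 - \sum_(i < r) be i * (hd x i ^+ 2 - tlsq x i)
 - \sum_(i < r) ga i * hd x i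
 - \sum_(i < r) mu i * (((1 + t) * hd w i) ^+ 2 - (1 + t) ^+ 2 * tlsq w i)
 - \sum_(i < r) th i * ((1 + t) * hd w i)
 - de * (eT x - 1)
 - et * (eT y - c)).
  apply: funext => t; rewrite vsc /lagr /fobj dotv_scr tlsq_scf.
  done.
rewrite e in H.
have H2 := dB (dB (dB (dB (dB (dB (dB (dD (dcst 0 (\sum_k (y k - c * x k) ^+ 2)) (Dp (dotv x w)))
  (dsumseq _ _ (fun k => Dalw (al k) (w k) (tapp A y k) (tapp B x k))))
  (dcst 0 (\sum_(i < r) be i * (hd x i ^+ 2 - tlsq x i))))
  (dcst 0 (\sum_(i < r) ga i * hd x i)))
  (dsumseq _ _ (fun i => Dbe (mu i) (hd w i) (tlsq w i))))
  (dsumseq _ _ (fun i => Dga (th i) (hd w i))))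
  (dcst 0 (de * (eT x - 1))))
  (dcst 0 (et * (eT y - c))).
have := duniq (H2 _ _ _ _ _ _) H.
clear H2 H e hst => E.
have Z1 : \sum_(i < r) mu i * (hd w i * hd w i * 2 - tlsq w i * 2) = 0.
  rewrite big1 // => i _; have [h _] := hc i.
  by rewrite -[hd w i * hd w i]expr2 -mulrBl mulrA h mul0r.
have Z2 : \sum_(i < r) th i * hd w i = 0.
  by rewrite big1 // => i _; case: (hc i).
by rewrite -[RHS]E Z1 Z2; ring.
Qed.

Lemma El : odd m.-1 -> is_derive lam 1 (fun l => L x y w l) 0 ->
  \sum_k (y k - c * x k) * x k * (-2) + et = 0.
Proof.
move=> ho hl.
have eq : (fun l => L x y w l) \o (fun cc => cc ^+ m.-1) =
  (fun cc => \sum_k (y k - cc * x k) ^+ 2 + dotv x w ^+ 2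
   - dotv al (fun k => w k - tapp A y k + tapp B x k)
   - \sum_(i < r) be i * (hd x i ^+ 2 - tlsq x i)
   - \sum_(i < r) ga i * hd x i
   - \sum_(i < r) mu i * (hd w i ^+ 2 - tlsq w i)
   - \sum_(i < r) th i * hd w i
   - de * (eT x - 1)
   - et * (eT y - cc)).
  by apply: funext => cc; rewrite /= /lagr /fobj oddrK1.
have Hl : is_derive (c ^+ m.-1) 1 (fun l => L x y w l) 0 by rewrite oddrK2.
have Hc := @is_derive1_comp R (fun l => L x y w l) (fun cc => cc ^+ m.-1) c _ _ Hl (dX m.-1 (did c)).
rewrite eq in Hc.
have H2 := dB (dB (dB (dB (dB (dB (dB (dD (dsumseq _ _ (fun k => Dl c (y k) (x k))) (dcst c (dotv x w ^+ 2)))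
  (dcst c (dotv al (fun k => w k - tapp A y k + tapp B x k))))
  (dcst c (\sum_(i < r) be i * (hd x i ^+ 2 - tlsq x i))))
  (dcst c (\sum_(i < r) ga i * hd x i)))
  (dcst c (\sum_(i < r) mu i * (hd w i ^+ 2 - tlsq w i))))
  (dcst c (\sum_(i < r) th i * hd w i)))
  (dcst c (de * (eT x - 1))))
  (dM (dcst c et) (dB (dcst c (eT y)) (did c))).
have := duniq (H2 _ _) Hc.
rewrite mul0r => E.
by rewrite -[RHS]E /=; ring.
Qed.
End Blocks.
End S.

Unset Implicit Arguments. Set Strict Implicit.
Theorem theorem5 (R : realType) (r : nat) (d : 'I_r -> nat) (m : nat)
  (A B : tensor R d m)
  (x y w : vec R d) (lam : R)
  (al : vec R d) (be ga mu th : 'I_r -> R) (de et : R) :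
  (2 <= m)%N -> ~~ odd m ->
  subsym A -> subsym B ->
  stationary A B x y w lam al be ga mu th de et ->
  lam != 0 ->
  (fobj m x y w lam = 0 <-> de = 0 /\ et = 0).
Proof.
move=> hm hev _ _ [[hwf hxc hwc heTx heTy] [hx [hy [hw hl]]] _ hcx hcw] _.
have ho : odd m.-1.
  by move: hm hev; case: (m) => [|n] //= _; rewrite negbK.
have E1 := Ex hx hcx heTx.
have E2 := Ey hy heTy.
have E3 := Ew hw hcw.
have E4 := El ho hl.
set c := oddroot m.-1 lam in E1 E2 E4 heTy *.
set P := dotv x w in E1 E3 *.
set n : R := m.-1%:R in E1 E2.
set Szx := \sum_k (y k - c * x k) * x k.
set Szy := \sum_k (y k - c * x k) * y k.
set Sa := \sum_k al k * tapp A y k.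
set Sb := \sum_k al k * tapp B x k.
have I1 : \sum_k (y k - c * x k) * (c * x k) * (-2) = -2 * c * Szx.
  by rewrite /Szx mulr_sumr; apply: eq_bigr => k _; ring.
have I2 : \sum_k (y k - c * x k) * y k * 2 = 2 * Szy.
  by rewrite /Szy mulr_sumr; apply: eq_bigr => k _; ring.
have I3 : \sum_k al k * (tapp B x k * n) = n * Sb.
  by rewrite /Sb mulr_sumr; apply: eq_bigr => k _; ring.
have I4 : \sum_k al k * (tapp A y k * n) = n * Sa.
  by rewrite /Sa mulr_sumr; apply: eq_bigr => k _; ring.
have I5 : \sum_k (y k - c * x k) * x k * (-2) = -2 * Szx.
  by rewrite /Szx mulr_sumr; apply: eq_bigr => k _; ring.
have I6 : \sum_k al k * w k = Sa - Sb.
  rewrite /Sa /Sb -sumrB; apply: eq_bigr => k _.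
  have := hwf k => h; rewrite -mulrBr; congr (_ * _).
  by apply/eqP; rewrite -subr_eq0; apply/eqP; rewrite -h; ring.
have I7 : \sum_k (y k - c * x k) ^+ 2 = Szy - c * Szx.
  by rewrite /Szy /Szx mulr_sumr -sumrB; apply: eq_bigr => k _; ring.
rewrite I1 I3 in E1; rewrite I2 I4 in E2; rewrite I6 in E3; rewrite I5 in E4.
have key : 2 * (Szy - c * Szx) + 2 * (n + 1) * (P * P) = de + et * c.
  apply/eqP; rewrite -subr_eq0; apply/eqP.
  transitivity ((-2 * c * Szx + P * P * 2 - n * Sb - de) + (2 * Szy + n * Sa - et * c)
     + n * (P * P * 2 - (Sa - Sb))); first ring.
  by rewrite E1 E2 E3; ring.
have hS : 0 <= \sum_k (y k - c * x k) ^+ 2 by apply: sumr_ge0 => k _; exact: sqr_ge0.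
have hP : 0 <= P * P by rewrite -expr2 sqr_ge0.
have hn : 0 <= n by rewrite /n ler0n.
rewrite /fobj -/c -/P.
split.
- move=> hf.
  have hz : \sum_k (y k - c * x k) ^+ 2 = 0.
    by have := sqr_ge0 P; lra.
  have zk : forall k, y k - c * x k = 0.
    move=> k; apply/eqP; rewrite -sqrf_eq0; apply/eqP.
    by apply: (psumr_eq0P _ hz) => // k' _; exact: sqr_ge0.
  have hSzx : Szx = 0 by rewrite /Szx big1 // => k _; rewrite zk mul0r.
  have het : et = 0 by move: E4; rewrite hSzx mulr0 add0r.
  split => //.
  have hPP : P * P = 0 by move: hf; rewrite hz add0r expr2.
  move: key; rewrite -I7 hz het hPP !mulr0 mul0r !addr0 => <-; done.
- move=> [hde het]; move: key; rewrite hde het mul0r addr0 -I7 => key.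
  rewrite expr2; nra.
Qed.
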